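(* Let $t$, $u$ be two terms of type $A$ in context $\Gamma$ of $\mathrm{IK}_C$. If for all Cartesian closed categories $\mathcal{M}$ equipped with an adjunction it is the case that $[\![t]\!] = [\![u]\!] : \mathcal{M}([\![\Gamma]\!],[\![A]\!])$, then $t \equiv u$ in context $\Gamma$ at type $A$.
   Context: $\mathrm{IK}_C$ is the Fitch-style calculus with types $A ::= \iota\mid A\to B\mid\Box A$ and contexts $\Gamma::=\cdot\mid\Gamma,A\mid\Gamma,\mathsf{lock}$ ($\mathsf{lock}$ the context lock); $\Delta\mathrel{R}\Gamma$ holds when $\Gamma=\Delta,\mathsf{lock},\Delta'$ with $\Delta'$ lock-free. Terms: STLC plus $\mathsf{box}\,t:\Box A$ in $\Gamma$ from $t:A$ in $\Gamma,\mathsf{lock}$, and $\mathsf{unbox}(t,e):A$ in $\Gamma$ from $t:\Box A$ in $\Delta$ and $e:\Delta\mathrel{R}\Gamma$. Equational theory: function $\beta,\eta$; $\mathsf{unbox}(\mathsf{box}\,t,e)\equiv\mathit{wk}(\mathit{factor}(e),t)$; $t\equiv\mathsf{box}(\mathsf{unbox}(t,\mathit{nil}))$. Terms are interpreted in a CCC with an adjunction $\mathsf{lock}\dashv\Box$ by interpreting $\Box$, $\mathsf{lock}$ as right/left adjoint and $\mathsf{box}$/$\mathsf{unbox}$ via the adjuncts (Clouston's semantics). *)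

(* Defs.v *)
Set Implicit Arguments.

Inductive Ty : Type :=
| iota : Ty
| arr : Ty -> Ty -> Ty
| box : Ty -> Ty.

Inductive Ctx : Type :=
| cnil : Ctx
| cext : Ctx -> Ty -> Ctx
| clock : Ctx -> Ctx.

(** Variables: only from the lock-free suffix of the context. *)
Inductive Var : Ctx -> Ty -> Type :=
| vz : forall G A, Var (cext G A) A
| vs : forall G A B, Var G A -> Var (cext G B) A.

(** [Rel D G] : witnesses  D R G, i.e. G = D, lock, D'  with D' lock-free. *)
Inductive Rel (D : Ctx) : Ctx -> Type :=
| r_nil : Rel D (clock D)
| r_ext : forall G A, Rel D G -> Rel D (cext G A).

Inductive Tm : Ctx -> Ty -> Type :=
| var : forall G A, Var G A -> Tm G A
| lam : forall G A B, Tm (cext G A) B -> Tm G (arr A B)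
| app : forall G A B, Tm G (arr A B) -> Tm G A -> Tm G B
| tbox : forall G A, Tm (clock G) A -> Tm G (box A)
| unbox : forall D G A, Tm D (box A) -> Rel D G -> Tm G A.

(** * Weakenings (order-preserving embeddings) [Wk G G'] : G ⊆ G' *)
Inductive Wk : Ctx -> Ctx -> Type :=
| wbase : Wk cnil cnil
| wdrop : forall G G' A, Wk G G' -> Wk G (cext G' A)
| wkeep : forall G G' A, Wk G G' -> Wk (cext G A) (cext G' A)
| wkeepL : forall G G', Wk G G' -> Wk (clock G) (clock G').

Fixpoint idWk (G : Ctx) : Wk G G :=
  match G with
  | cnil => wbase
  | cext G A => wkeep A (idWk G)
  | clock G => wkeepL (idWk G)
  end.

Fixpoint factor D G (e : Rel D G) : Wk (clock D) G :=
  match e in Rel _ G return Wk (clock D) G with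
  | r_nil _ => wkeepL (idWk D)
  | r_ext A e0 => wdrop A (factor e0)
  end.

Definition relNilInv D (e : Rel D cnil) : False :=
  match e in Rel _ H return match H with cnil => False | _ => True end with
  | r_nil _ => I
  | r_ext _ _ => I
  end.

Definition relExtInv D G A (e : Rel D (cext G A)) : Rel D G :=
  match e in Rel _ H return match H with cext H0 _ => Rel D H0 | _ => unit end with
  | r_nil _ => tt
  | r_ext _ e0 => e0
  end.

Definition relLockInv D G (e : Rel D (clock G)) : D = G :=
  match e in Rel _ H return match H with clock H0 => D = H0 | _ => True end with
  | r_nil _ => eq_refl
  | r_ext _ _ => I
  end.

Definition varNilInv A (x : Var cnil A) : False :=
  match x in Var H _ return match H with cnil => False | _ => True end with
  | vz _ _ => I
  | vs _ _ => I
  end.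

Definition varLockInv G A (x : Var (clock G) A) : False :=
  match x in Var H _ return match H with clock _ => False | _ => True end with
  | vz _ _ => I
  | vs _ _ => I
  end.

Fixpoint wkVar G G' (w : Wk G G') {struct w} : forall A, Var G A -> Var G' A :=
  match w in Wk G G' return forall A, Var G A -> Var G' A with
  | wbase => fun A x => False_rect _ (varNilInv x)
  | wdrop B w0 => fun A x => vs B (wkVar w0 x)
  | @wkeep G0 G0' C w0 => fun A x =>
      match x in Var H B
      return match H with
             | cext H0 C' => (forall B', Var H0 B' -> Var G0' B') -> Var (cext G0' C') B
             | _ => unit
             end with
      | vz _ _ => fun _ => vz _ _
      | vs C' x0 => fun rec => vs C' (rec _ x0)
      end (wkVar w0)
  | wkeepL w0 => fun A x => False_rect _ (varLockInv x)
  end.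

Fixpoint factorWk G G' (w : Wk G G') {struct w}
  : forall D, Rel D G -> {D' : Ctx & (Wk D D' * Rel D' G')%type} :=
  match w in Wk G G' return forall D, Rel D G -> {D' : Ctx & (Wk D D' * Rel D' G')%type} with
  | wbase => fun D e => False_rect _ (relNilInv e)
  | wdrop A w0 => fun D e =>
      let (D', p) := factorWk w0 e in
      existT _ D' (fst p, r_ext A (snd p))
  | wkeep A w0 => fun D e =>
      let (D', p) := factorWk w0 (relExtInv e) in
      existT _ D' (fst p, r_ext A (snd p))
  | @wkeepL G0 G0' w0 => fun D e =>
      existT _ G0' (eq_rect G0 (fun X => Wk X G0') w0 D (eq_sym (relLockInv e)),
                    r_nil G0')
  end.

Fixpoint wkTm G A (t : Tm G A) {struct t} : forall G', Wk G G' -> Tm G' A :=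
  match t in Tm G A return forall G', Wk G G' -> Tm G' A with
  | var x => fun G' w => var (wkVar w x)
  | lam t0 => fun G' w => lam (wkTm t0 (wkeep _ w))
  | app t1 t2 => fun G' w => app (wkTm t1 w) (wkTm t2 w)
  | tbox t0 => fun G' w => tbox (wkTm t0 (wkeepL w))
  | unbox t0 e => fun G' w =>
      let (D', p) := factorWk w e in unbox (wkTm t0 (fst p)) (snd p)
  end.

(** * Substitutions [Sub D G] : a term in D for every variable of G *)
Inductive Sub : Ctx -> Ctx -> Type :=
| snil : forall D, Sub D cnil
| sext : forall D G A, Sub D G -> Tm D A -> Sub D (cext G A)
| slock : forall D D' G, Sub D G -> Rel D D' -> Sub D' (clock G).

Fixpoint wkSub D G (s : Sub D G) {struct s} : forall D', Wk D D' -> Sub D' G :=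
  match s in Sub D G return forall D', Wk D D' -> Sub D' G with
  | snil _ => fun D' w => snil D'
  | sext s0 t => fun D' w => sext (wkSub s0 w) (wkTm t w)
  | slock s0 r => fun D' w =>
      let (D0', p) := factorWk w r in slock (wkSub s0 (fst p)) (snd p)
  end.

Fixpoint idSub (G : Ctx) : Sub G G :=
  match G with
  | cnil => snil cnil
  | cext G A => sext (wkSub (idSub G) (wdrop A (idWk G))) (var (vz G A))
  | clock G => slock (idSub G) (r_nil G)
  end.

Definition subHead D G A (s : Sub D (cext G A)) : Tm D A :=
  match s in Sub D H return match H with cext _ B => Tm D B | _ => unit end with
  | snil _ => tt
  | sext _ t => t
  | slock _ _ => tt
  end.

Definition subTail D G A (s : Sub D (cext G A)) : Sub D G :=
  match s in Sub D H return match H with cext H0 _ => Sub D H0 | _ => unit end with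
  | snil _ => tt
  | sext s0 _ => s0
  | slock _ _ => tt
  end.

Definition subLockInv D G (s : Sub D (clock G)) : {D0 : Ctx & (Sub D0 G * Rel D0 D)%type} :=
  match s in Sub D H
  return match H with clock H0 => {D0 : Ctx & (Sub D0 H0 * Rel D0 D)%type} | _ => unit end with
  | snil _ => tt
  | sext _ _ => tt
  | slock s0 r => existT _ _ (s0, r)
  end.

Fixpoint factorSub G0 G (e : Rel G0 G) {struct e}
  : forall D, Sub D G -> {D0 : Ctx & (Sub D0 G0 * Rel D0 D)%type} :=
  match e in Rel _ G return forall D, Sub D G -> {D0 : Ctx & (Sub D0 G0 * Rel D0 D)%type} with
  | r_nil _ => fun D s => subLockInv s
  | r_ext _ e0 => fun D s => factorSub e0 (subTail s)
  end.

Fixpoint lookup G A (x : Var G A) {struct x} : forall D, Sub D G -> Tm D A :=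
  match x in Var G A return forall D, Sub D G -> Tm D A with
  | vz _ _ => fun D s => subHead s
  | vs _ x0 => fun D s => lookup x0 (subTail s)
  end.

Definition liftSub D G A (s : Sub D G) : Sub (cext D A) (cext G A) :=
  sext (wkSub s (wdrop A (idWk D))) (var (vz D A)).

Fixpoint subst G A (t : Tm G A) {struct t} : forall D, Sub D G -> Tm D A :=
  match t in Tm G A return forall D, Sub D G -> Tm D A with
  | var x => fun D s => lookup x s
  | lam t0 => fun D s => lam (subst t0 (liftSub _ s))
  | app t1 t2 => fun D s => app (subst t1 s) (subst t2 s)
  | tbox t0 => fun D s => tbox (subst t0 (slock s (r_nil D)))
  | unbox t0 e => fun D s =>
      let (D0, p) := factorSub e s in unbox (subst t0 (fst p)) (snd p)
  end.

Inductive Conv : forall G A, Tm G A -> Tm G A -> Prop :=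
| conv_refl : forall G A (t : Tm G A), Conv t t
| conv_sym : forall G A (t u : Tm G A), Conv t u -> Conv u t
| conv_trans : forall G A (t u v : Tm G A), Conv t u -> Conv u v -> Conv t v
| cong_lam : forall G A B (t u : Tm (cext G A) B), Conv t u -> Conv (lam t) (lam u)
| cong_app : forall G A B (t t' : Tm G (arr A B)) (u u' : Tm G A),
    Conv t t' -> Conv u u' -> Conv (app t u) (app t' u')
| cong_box : forall G A (t u : Tm (clock G) A), Conv t u -> Conv (tbox t) (tbox u)
| cong_unbox : forall D G A (t u : Tm D (box A)) (e : Rel D G),
    Conv t u -> Conv (unbox t e) (unbox u e)
| beta_fun : forall G A B (t : Tm (cext G A) B) (u : Tm G A),
    Conv (app (lam t) u) (subst t (sext (idSub G) u))
| eta_fun : forall G A B (t : Tm G (arr A B)),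
    Conv t (lam (app (wkTm t (wdrop A (idWk G))) (var (vz G A))))
| beta_box : forall D G A (t : Tm (clock D) A) (e : Rel D G),
    Conv (unbox (tbox t) e) (wkTm t (factor e))
| eta_box : forall G A (t : Tm G (box A)),
    Conv t (tbox (unbox t (r_nil G))).

Record CCC : Type := {
  Obj : Type;
  Hom : Obj -> Obj -> Type;
  idm : forall a, Hom a a;
  comp : forall a b c, Hom b c -> Hom a b -> Hom a c;
  comp_id_l : forall a b (f : Hom a b), comp (idm b) f = f;
  comp_id_r : forall a b (f : Hom a b), comp f (idm a) = f;
  comp_assoc : forall a b c d (f : Hom a b) (g : Hom b c) (h : Hom c d),
      comp h (comp g f) = comp (comp h g) f;
  one : Obj;
  bang : forall a, Hom a one;
  bang_uniq : forall a (f : Hom a one), f = bang a;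
  prod : Obj -> Obj -> Obj;
  pfst : forall a b, Hom (prod a b) a;
  psnd : forall a b, Hom (prod a b) b;
  pair : forall c a b, Hom c a -> Hom c b -> Hom c (prod a b);
  pair_fst : forall c a b (f : Hom c a) (g : Hom c b), comp (pfst a b) (pair f g) = f;
  pair_snd : forall c a b (f : Hom c a) (g : Hom c b), comp (psnd a b) (pair f g) = g;
  pair_uniq : forall c a b (h : Hom c (prod a b)),
      h = pair (comp (pfst a b) h) (comp (psnd a b) h);
  expo : Obj -> Obj -> Obj;                (* expo a b = b^a *)
  ev : forall a b, Hom (prod (expo a b) a) b;
  cur : forall c a b, Hom (prod c a) b -> Hom c (expo a b);
  cur_beta : forall c a b (f : Hom (prod c a) b),
      comp (ev a b) (pair (comp (cur f) (pfst c a)) (psnd c a)) = f;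
  cur_uniq : forall c a b (h : Hom c (expo a b)),
      h = cur (comp (ev a b) (pair (comp h (pfst c a)) (psnd c a)))
}.

Arguments Hom {_} _ _.
Arguments idm {_} _.
Arguments comp {_ _ _ _} _ _.
Arguments one {_}.
Arguments bang {_} _.
Arguments prod {_} _ _.
Arguments pfst {_ _ _}.
Arguments psnd {_ _ _}.
Arguments pair {_ _ _ _} _ _.
Arguments expo {_} _ _.
Arguments ev {_ _ _}.
Arguments cur {_ _ _ _} _.

(** An adjunction  L ⊣ R  of endofunctors on a CCC (L interprets the lock,
    R interprets Box), given by a natural bijection of hom-sets. *)
Record Adj (C : CCC) : Type := {
  L : Obj C -> Obj C;
  Lmap : forall a b : Obj C, Hom a b -> Hom (L a) (L b);
  Lmap_id : forall a : Obj C, Lmap a a (idm a) = idm (L a);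
  Lmap_comp : forall (a b c : Obj C) (f : Hom a b) (g : Hom b c),
      Lmap a c (comp g f) = comp (Lmap b c g) (Lmap a b f);
  R : Obj C -> Obj C;
  Rmap : forall a b : Obj C, Hom a b -> Hom (R a) (R b);
  Rmap_id : forall a : Obj C, Rmap a a (idm a) = idm (R a);
  Rmap_comp : forall (a b c : Obj C) (f : Hom a b) (g : Hom b c),
      Rmap a c (comp g f) = comp (Rmap b c g) (Rmap a b f);
  adjr : forall a b : Obj C, Hom (L a) b -> Hom a (R b);
  adjl : forall a b : Obj C, Hom a (R b) -> Hom (L a) b;
  adjl_adjr : forall (a b : Obj C) (f : Hom (L a) b), adjl a b (adjr a b f) = f;
  adjr_adjl : forall (a b : Obj C) (g : Hom a (R b)), adjr a b (adjl a b g) = g;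
  adj_nat : forall (a a' b b' : Obj C) (h : Hom a' a) (g : Hom b b') (f : Hom (L a) b),
      adjr a' b' (comp g (comp f (Lmap a' a h)))
      = comp (Rmap b b' g) (comp (adjr a b f) h)
}.

Arguments L {_} _ _.
Arguments R {_} _ _.
Arguments adjr {_} _ {_ _} _.
Arguments adjl {_} _ {_ _} _.

Section Sem.
Variables (M : CCC) (F : Adj M) (io : Obj M).

Fixpoint semTy (A : Ty) : Obj M :=
  match A with
  | iota => io
  | arr A B => expo (semTy A) (semTy B)
  | box A => R F (semTy A)
  end.

Fixpoint semCtx (G : Ctx) : Obj M :=
  match G with
  | cnil => one
  | cext G A => prod (semCtx G) (semTy A)
  | clock G => L F (semCtx G)
  end.

Fixpoint semVar G A (x : Var G A) : Hom (semCtx G) (semTy A) :=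
  match x in Var G A return Hom (semCtx G) (semTy A) with
  | vz _ _ => psnd
  | vs _ x0 => comp (semVar x0) pfst
  end.

Fixpoint semRel D G (e : Rel D G) : Hom (semCtx G) (L F (semCtx D)) :=
  match e in Rel _ G return Hom (semCtx G) (L F (semCtx D)) with
  | r_nil _ => idm _
  | r_ext _ e0 => comp (semRel e0) pfst
  end.

Fixpoint semTm G A (t : Tm G A) : Hom (semCtx G) (semTy A) :=
  match t in Tm G A return Hom (semCtx G) (semTy A) with
  | var x => semVar x
  | lam t0 => cur (semTm t0)
  | app t1 t2 => comp ev (pair (semTm t1) (semTm t2))
  | tbox t0 => adjr F (semTm t0)
  | unbox t0 e => comp (adjl F (semTm t0)) (semRel e)
  end.
End Sem.

(* Main.v *)
Require Import Defs.
From Stdlib Require Import Program.Equality FunctionalExtensionality ProofIrrelevance.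
Set Implicit Arguments.

Fixpoint wcomp G1 G2 G3 (w1 : Wk G1 G2) (w2 : Wk G2 G3) {struct w2} : Wk G1 G3 :=
  match w2 in Wk G2 G3 return Wk G1 G2 -> Wk G1 G3 with
  | wbase => fun w1 => w1
  | wdrop A w2' => fun w1 => wdrop A (wcomp w1 w2')
  | @wkeep H H' A w2' => fun w1 =>
      match w1 in Wk G1 X return
        match X with cext X0 B => (forall Z, Wk Z X0 -> Wk Z H') -> Wk G1 (cext H' B) | _ => unit end with
      | wdrop B w1' => fun rec => wdrop B (rec _ w1')
      | wkeep B w1' => fun rec => wkeep B (rec _ w1')
      | _ => tt
      end (fun Z w => wcomp w w2')
  | @wkeepL H H' w2' => fun w1 =>
      match w1 in Wk G1 X return
        match X with clock X0 => (forall Z, Wk Z X0 -> Wk Z H') -> Wk G1 (clock H') | _ => unit end with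
      | wkeepL w1' => fun rec => wkeepL (rec _ w1')
      | _ => tt
      end (fun Z w => wcomp w w2')
  end w1.

Lemma wcomp_id_l G G' (w : Wk G G') : wcomp (idWk G) w = w.
Proof. induction w; simpl; f_equal; auto. Qed.

Lemma wcomp_id_r G G' (w : Wk G G') : wcomp w (idWk G') = w.
Proof. induction w; simpl; f_equal; auto. Qed.

Lemma wcomp_assoc G1 G2 G3 G4 (w1 : Wk G1 G2) (w2 : Wk G2 G3) (w3 : Wk G3 G4) :
  wcomp (wcomp w1 w2) w3 = wcomp w1 (wcomp w2 w3).
Proof.
  revert G1 G2 w1 w2; induction w3; intros G1 G2 w1 w2; simpl.
  - reflexivity.
  - f_equal; auto.
  - dependent destruction w2; simpl.
    + f_equal; auto.
    + dependent destruction w1; simpl; f_equal; auto.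
  - dependent destruction w2; dependent destruction w1; simpl; f_equal; auto.
Qed.

Lemma wkVar_id G A (x : Var G A) : wkVar (idWk G) x = x.
Proof. induction x; simpl; f_equal; auto. Qed.

Lemma wkVar_comp G1 G2 G3 (w1 : Wk G1 G2) (w2 : Wk G2 G3) A (x : Var G1 A) :
  wkVar (wcomp w1 w2) x = wkVar w2 (wkVar w1 x).
Proof.
  revert G1 w1 A x; induction w2; intros G1 w1 A0 x; simpl.
  - dependent destruction w1. destruct (varNilInv x).
  - f_equal; auto.
  - dependent destruction w1; simpl.
    + f_equal; auto.
    + dependent destruction x; simpl; f_equal; auto.
  - dependent destruction w1. destruct (varLockInv x).
Qed.

Lemma factorWk_id G D (e : Rel D G) : factorWk (idWk G) e = existT _ D (idWk D, e).
Proof.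
  induction e; simpl.
  - reflexivity.
  - rewrite IHe. reflexivity.
Qed.

Lemma factorWk_comp G1 G2 G3 (w1 : Wk G1 G2) (w2 : Wk G2 G3) D (e : Rel D G1) :
  factorWk (wcomp w1 w2) e =
  let (D1, p1) := factorWk w1 e in
  let (D2, p2) := factorWk w2 (snd p1) in
  existT _ D2 (wcomp (fst p1) (fst p2), snd p2).
Proof.
  revert G1 w1 D e; induction w2; intros G1 w1 D e; simpl.
  - dependent destruction w1. destruct (relNilInv e).
  - rewrite IHw2. destruct (factorWk w1 e) as [D1 [a1 b1]]; simpl.
    destruct (factorWk w2 b1) as [D2 [a2 b2]]; reflexivity.
  - dependent destruction w1; simpl.
    + rewrite IHw2. destruct (factorWk w1 e) as [D1 [a1 b1]]; simpl.
      destruct (factorWk w2 b1) as [D2 [a2 b2]]; reflexivity.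
    + dependent destruction e; simpl.
      rewrite IHw2. destruct (factorWk w1 e) as [D1 [a1 b1]]; simpl.
      destruct (factorWk w2 b1) as [D2 [a2 b2]]; reflexivity.
  - dependent destruction w1; simpl.
    dependent destruction e. simpl. reflexivity.
Qed.

Lemma factor_nat D G (e : Rel D G) G' (w : Wk G G') :
  wcomp (factor e) w =
  let (D', p) := factorWk w e in wcomp (wkeepL (fst p)) (factor (snd p)).
Proof.
  revert D e; induction w; intros D e; simpl.
  - destruct (relNilInv e).
  - rewrite IHw. destruct (factorWk w e) as [D1 [a b]]; reflexivity.
  - dependent destruction e; simpl. rewrite IHw.
    destruct (factorWk w e) as [D1 [a b]]; reflexivity.
  - dependent destruction e; simpl. rewrite wcomp_id_l, wcomp_id_r. reflexivity.
Qed.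

Lemma factorWk_factor D G (e : Rel D G) : factorWk (factor e) (r_nil D) = existT _ D (idWk D, e).
Proof. induction e; simpl; [reflexivity| rewrite IHe; reflexivity]. Qed.
Set Implicit Arguments.

Lemma wkTm_id G A (t : Tm G A) : wkTm t (idWk G) = t.
Proof.
  induction t; simpl.
  - rewrite wkVar_id; reflexivity.
  - change (wkeep A (idWk G)) with (idWk (cext G A)). rewrite IHt; reflexivity.
  - rewrite IHt1, IHt2; reflexivity.
  - change (wkeepL (idWk G)) with (idWk (clock G)). rewrite IHt; reflexivity.
  - rewrite factorWk_id. simpl. rewrite IHt. reflexivity.
Qed.

Lemma wkTm_comp G1 A (t : Tm G1 A) G2 G3 (w1 : Wk G1 G2) (w2 : Wk G2 G3) :
  wkTm t (wcomp w1 w2) = wkTm (wkTm t w1) w2.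
Proof.
  revert G2 G3 w1 w2; induction t; intros G2 G3 w1 w2; simpl.
  - rewrite wkVar_comp; reflexivity.
  - change (wkeep A (wcomp w1 w2)) with (wcomp (wkeep A w1) (wkeep A w2)). rewrite IHt; reflexivity.
  - rewrite IHt1, IHt2; reflexivity.
  - change (wkeepL (wcomp w1 w2)) with (wcomp (wkeepL w1) (wkeepL w2)). rewrite IHt; reflexivity.
  - rewrite factorWk_comp. destruct (factorWk w1 r) as [D1 [a1 b1]]; simpl.
    destruct (factorWk w2 b1) as [D2 [a2 b2]]; simpl. rewrite IHt. reflexivity.
Qed.

Lemma wkSub_id D G (s : Sub D G) : wkSub s (idWk D) = s.
Proof.
  induction s; simpl.
  - reflexivity.
  - rewrite IHs, wkTm_id; reflexivity.
  - rewrite factorWk_id; simpl. rewrite IHs; reflexivity.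
Qed.

Lemma wkSub_comp D G (s : Sub D G) D2 D3 (w1 : Wk D D2) (w2 : Wk D2 D3) :
  wkSub s (wcomp w1 w2) = wkSub (wkSub s w1) w2.
Proof.
  revert D2 D3 w1 w2; induction s; intros D2 D3 w1 w2; simpl.
  - reflexivity.
  - rewrite IHs, wkTm_comp; reflexivity.
  - rewrite factorWk_comp. destruct (factorWk w1 r) as [E1 [a1 b1]]; simpl.
    destruct (factorWk w2 b1) as [E2 [a2 b2]]; simpl. rewrite IHs. reflexivity.
Qed.

Lemma lookup_wk G A (x : Var G A) D (s : Sub D G) D' (w : Wk D D') :
  lookup x (wkSub s w) = wkTm (lookup x s) w.
Proof.
  revert D s D' w; induction x; intros D s D' w; dependent destruction s; simpl; auto.
Qed.

Lemma factorSub_wk G0 G (e : Rel G0 G) D (s : Sub D G) D' (w : Wk D D') :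
  factorSub e (wkSub s w) =
  let (D0, p) := factorSub e s in
  let (D1, q) := factorWk w (snd p) in
  existT _ D1 (wkSub (fst p) (fst q), snd q).
Proof.
  revert D s D' w; induction e; intros D s D' w; dependent destruction s; simpl.
  - destruct (factorWk w r) as [D1 [a b]]; reflexivity.
  - apply IHe.
Qed.

Lemma wdrop_id_l G G' A (w : Wk G G') : wcomp (wdrop A (idWk G)) (wkeep A w) = wdrop A w.
Proof. simpl. rewrite wcomp_id_l. reflexivity. Qed.
Lemma wdrop_id_r G G' A (w : Wk G G') : wcomp w (wdrop A (idWk G')) = wdrop A w.
Proof. simpl. rewrite wcomp_id_r. reflexivity. Qed.

Lemma wkSub_lift D G A (s : Sub D G) D' (w : Wk D D') :
  wkSub (liftSub A s) (wkeep A w) = liftSub A (wkSub s w).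
Proof.
  unfold liftSub; simpl. rewrite <- !wkSub_comp, wdrop_id_l, wdrop_id_r. reflexivity.
Qed.

Lemma subst_wk G A (t : Tm G A) D (s : Sub D G) D' (w : Wk D D') :
  wkTm (subst t s) w = subst t (wkSub s w).
Proof.
  revert D s D' w; induction t; intros D0 s D' w; simpl.
  - symmetry; apply lookup_wk.
  - rewrite IHt, wkSub_lift. reflexivity.
  - rewrite IHt1, IHt2; reflexivity.
  - rewrite IHt. reflexivity.
  - rewrite factorSub_wk. destruct (factorSub r s) as [E0 [a b]]; simpl.
    destruct (factorWk w b) as [D1 [c d]]; simpl. rewrite IHt. reflexivity.
Qed.
Set Implicit Arguments.

Fixpoint rsub G G' (w : Wk G G') {struct w} : forall D, Sub D G' -> Sub D G :=
  match w in Wk G G' return forall D, Sub D G' -> Sub D G with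
  | wbase => fun D _ => snil D
  | wdrop A w0 => fun D s => rsub w0 (subTail s)
  | wkeep A w0 => fun D s => sext (rsub w0 (subTail s)) (subHead s)
  | wkeepL w0 => fun D s => let (D0, p) := subLockInv s in slock (rsub w0 (fst p)) (snd p)
  end.

Lemma lookup_rsub G G' (w : Wk G G') A (x : Var G A) D (s : Sub D G') :
  lookup x (rsub w s) = lookup (wkVar w x) s.
Proof.
  revert A x D s; induction w; intros A0 x D s; simpl.
  - destruct (varNilInv x).
  - dependent destruction s; simpl. apply IHw.
  - dependent destruction s; dependent destruction x; simpl; auto.
  - destruct (varLockInv x).
Qed.

Lemma factorSub_rsub G G' (w : Wk G G') G0 (e : Rel G0 G) D (s : Sub D G') :
  factorSub e (rsub w s) =
  let (D', p) := factorWk w e in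
  let (D0, q) := factorSub (snd p) s in
  existT _ D0 (rsub (fst p) (fst q), snd q).
Proof.
  revert G0 e D s; induction w; intros G0 e D s; simpl.
  - destruct (relNilInv e).
  - dependent destruction s; simpl. rewrite IHw.
    destruct (factorWk w e) as [D1 [a b]]; simpl. reflexivity.
  - dependent destruction s; dependent destruction e; simpl. rewrite IHw.
    destruct (factorWk w e) as [D1 [a b]]; simpl. reflexivity.
  - dependent destruction s; dependent destruction e; simpl. reflexivity.
Qed.

Lemma rsub_wk G G' (w : Wk G G') D (s : Sub D G') D' (w' : Wk D D') :
  rsub w (wkSub s w') = wkSub (rsub w s) w'.
Proof.
  revert D s D' w'; induction w; intros D s D' w'; simpl.
  - reflexivity.
  - dependent destruction s; simpl. apply IHw.
  - dependent destruction s; simpl. rewrite IHw. reflexivity.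
  - dependent destruction s; simpl. destruct (factorWk w' r) as [D1 [a b]]; simpl.
    rewrite IHw. reflexivity.
Qed.

Lemma rsub_lift G G' A (w : Wk G G') D (s : Sub D G') :
  rsub (wkeep A w) (liftSub A s) = liftSub A (rsub w s).
Proof. unfold liftSub; simpl. rewrite rsub_wk. reflexivity. Qed.

Lemma subst_rsub G A (t : Tm G A) G' (w : Wk G G') D (s : Sub D G') :
  subst (wkTm t w) s = subst t (rsub w s).
Proof.
  revert G' w D s; induction t; intros G' w D0 s; simpl.
  - symmetry; apply lookup_rsub.
  - rewrite IHt, rsub_lift. reflexivity.
  - rewrite IHt1, IHt2; reflexivity.
  - rewrite IHt. reflexivity.
  - rewrite factorSub_rsub. destruct (factorWk w r) as [D1 [a b]]; simpl.
    destruct (factorSub b s) as [E0 [c d]]; simpl. rewrite IHt. reflexivity.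
Qed.

Lemma rsub_id G D (s : Sub D G) : rsub (idWk G) s = s.
Proof.
  revert D s; induction G; intros D s; dependent destruction s; simpl; try rewrite IHG; reflexivity.
Qed.

Fixpoint scomp D G (s : Sub D G) {struct s} : forall E, Sub E D -> Sub E G :=
  match s in Sub D G return forall E, Sub E D -> Sub E G with
  | snil _ => fun E _ => snil E
  | sext s0 t => fun E tau => sext (scomp s0 tau) (subst t tau)
  | slock s0 e => fun E tau => let (E0, p) := factorSub e tau in slock (scomp s0 (fst p)) (snd p)
  end.

Lemma scomp_wk_l D G (s : Sub D G) D' (w : Wk D D') E (tau : Sub E D') :
  scomp (wkSub s w) tau = scomp s (rsub w tau).
Proof.
  revert D' w E tau; induction s; intros D1' w E tau; simpl.
  - reflexivity.
  - rewrite IHs, subst_rsub. reflexivity.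
  - rewrite factorSub_rsub. destruct (factorWk w r) as [D1 [a b]]; simpl.
    destruct (factorSub b tau) as [E0 [c d]]; simpl. rewrite IHs. reflexivity.
Qed.

Lemma scomp_wk_r D G (s : Sub D G) E (tau : Sub E D) E' (w : Wk E E') :
  scomp s (wkSub tau w) = wkSub (scomp s tau) w.
Proof.
  revert E tau E' w; induction s; intros E tau E' w; simpl.
  - reflexivity.
  - rewrite IHs, subst_wk. reflexivity.
  - rewrite factorSub_wk. destruct (factorSub r tau) as [E0 [a b]]; simpl.
    destruct (factorWk w b) as [E1 [c d]]; simpl. rewrite IHs. reflexivity.
Qed.

Lemma lookup_scomp G A (x : Var G A) D (s : Sub D G) E (tau : Sub E D) :
  lookup x (scomp s tau) = subst (lookup x s) tau.
Proof.
  revert D s E tau; induction x; intros D1 s E tau; dependent destruction s; simpl; auto.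
Qed.

Lemma factorSub_scomp G0 G (e : Rel G0 G) D (s : Sub D G) E (tau : Sub E D) :
  factorSub e (scomp s tau) =
  let (D0, p) := factorSub e s in
  let (E0, q) := factorSub (snd p) tau in
  existT _ E0 (scomp (fst p) (fst q), snd q).
Proof.
  revert D s E tau; induction e; intros D1 s E tau; dependent destruction s; simpl.
  - destruct (factorSub r tau) as [E0 [a b]]; reflexivity.
  - apply IHe.
Qed.

Lemma scomp_lift D G A (s : Sub D G) E (tau : Sub E D) :
  scomp (liftSub A s) (liftSub A tau) = liftSub A (scomp s tau).
Proof.
  unfold liftSub at 1. simpl. rewrite scomp_wk_l. simpl. rewrite rsub_id, scomp_wk_r. reflexivity.
Qed.

Lemma subst_subst G A (t : Tm G A) D (s : Sub D G) E (tau : Sub E D) :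
  subst (subst t s) tau = subst t (scomp s tau).
Proof.
  revert D s E tau; induction t; intros D1 s E tau; simpl.
  - symmetry; apply lookup_scomp.
  - rewrite IHt, scomp_lift. reflexivity.
  - rewrite IHt1, IHt2; reflexivity.
  - rewrite IHt. reflexivity.
  - rewrite factorSub_scomp. destruct (factorSub r s) as [D2 [a b]]; simpl.
    destruct (factorSub b tau) as [E0 [c d]]; simpl. rewrite IHt. reflexivity.
Qed.

Lemma lookup_id G A (x : Var G A) : lookup x (idSub G) = var x.
Proof.
  induction x; simpl; auto.
  rewrite lookup_wk, IHx. simpl. rewrite wkVar_id. reflexivity.
Qed.

Lemma factorSub_id G0 G (e : Rel G0 G) : factorSub e (idSub G) = existT _ G0 (idSub G0, e).
Proof.
  induction e; simpl.
  - reflexivity.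
  - rewrite factorSub_wk, IHe. simpl. rewrite factorWk_id. simpl. rewrite wkSub_id. reflexivity.
Qed.

Lemma subst_id G A (t : Tm G A) : subst t (idSub G) = t.
Proof.
  induction t; simpl.
  - apply lookup_id.
  - change (liftSub A (idSub G)) with (idSub (cext G A)). rewrite IHt. reflexivity.
  - rewrite IHt1, IHt2; reflexivity.
  - change (slock (idSub G) (r_nil G)) with (idSub (clock G)). rewrite IHt. reflexivity.
  - rewrite factorSub_id. simpl. rewrite IHt. reflexivity.
Qed.

Lemma scomp_id_r D G (s : Sub D G) : scomp s (idSub D) = s.
Proof.
  induction s; simpl.
  - reflexivity.
  - rewrite IHs, subst_id. reflexivity.
  - rewrite factorSub_id. simpl. rewrite IHs. reflexivity.
Qed.

Lemma rsub_idSub G G' (w : Wk G G') : rsub w (idSub G') = wkSub (idSub G) w.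
Proof.
  induction w; simpl.
  - reflexivity.
  - rewrite rsub_wk, IHw, <- wkSub_comp, wdrop_id_r. reflexivity.
  - rewrite rsub_wk, IHw, <- !wkSub_comp, wdrop_id_r, wdrop_id_l. reflexivity.
  - rewrite IHw. reflexivity.
Qed.

Lemma key_lam G A B (t : Tm (cext G A) B) D (s : Sub D G) D' (w : Wk D D') (a : Tm D' A) :
  subst (wkTm (subst t (liftSub A s)) (wkeep A w)) (sext (idSub D') a) = subst t (sext (wkSub s w) a).
Proof.
  rewrite subst_rsub, subst_subst. f_equal. simpl.
  unfold liftSub; simpl. rewrite scomp_wk_l. simpl. rewrite rsub_id.
  rewrite rsub_idSub, scomp_wk_r, scomp_id_r. reflexivity.
Qed.

Lemma key_beta G A B (t : Tm (cext G A) B) (u : Tm G A) G' (w : Wk G G') :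
  wkTm (subst t (sext (idSub G) u)) w = subst (wkTm t (wkeep A w)) (sext (idSub G') (wkTm u w)).
Proof.
  rewrite subst_wk, subst_rsub. simpl. rewrite rsub_idSub. reflexivity.
Qed.

Lemma Conv_wk G A (t u : Tm G A) : Conv t u -> forall G' (w : Wk G G'), Conv (wkTm t w) (wkTm u w).
Proof.
  induction 1; intros G' w; simpl.
  - apply conv_refl.
  - apply conv_sym; auto.
  - eapply conv_trans; eauto.
  - apply cong_lam; auto.
  - apply cong_app; auto.
  - apply cong_box; auto.
  - destruct (factorWk w e) as [D1 [a b]]; simpl. apply cong_unbox; auto.
  - rewrite key_beta. apply beta_fun.
  - rewrite <- wkTm_comp, wdrop_id_l, <- wdrop_id_r, wkTm_comp. apply eta_fun.
  - pose proof (factor_nat e w) as Hn.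
    destruct (factorWk w e) as [D1 [a b]]; simpl in *.
    rewrite <- wkTm_comp, Hn, wkTm_comp. apply beta_box.
  - apply eta_box.
Qed.
Set Implicit Arguments.

Record PSh := {
  ob :> Ctx -> Type;
  fm : forall G G', Wk G G' -> ob G -> ob G';
  fm_id : forall G x, fm (idWk G) x = x;
  fm_comp : forall G1 G2 G3 (w1 : Wk G1 G2) (w2 : Wk G2 G3) x, fm (wcomp w1 w2) x = fm w2 (fm w1 x)
}.
Arguments fm p {G G'} w x.

Definition NT (X Y : PSh) :=
  {f : forall G, X G -> Y G | forall G G' (w : Wk G G') x, f G' (fm X w x) = fm Y w (f G x)}.

Lemma nt_ext X Y (f g : NT X Y) : (forall G x, proj1_sig f G x = proj1_sig g G x) -> f = g.
Proof.
  destruct f as [f Hf], g as [g Hg]; simpl; intro H.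
  assert (f = g) by (apply functional_extensionality_dep; intro G; apply functional_extensionality; auto).
  subst. f_equal. apply proof_irrelevance.
Qed.

Definition idN X : NT X X.
Proof. refine (exist _ (fun G x => x) _); intros; reflexivity. Defined.
Definition compN X Y Z (g : NT Y Z) (f : NT X Y) : NT X Z.
Proof.
  refine (exist _ (fun G x => proj1_sig g G (proj1_sig f G x)) _).
  intros; rewrite (proj2_sig f), (proj2_sig g); reflexivity.
Defined.

Definition oneP : PSh := {| ob := fun _ => unit; fm := fun _ _ _ x => x;
  fm_id := fun _ _ => eq_refl; fm_comp := fun _ _ _ _ _ _ => eq_refl |}.

Definition bangN X : NT X oneP.
Proof. refine (exist _ (fun G x => tt) _); intros; reflexivity. Defined.

Definition prodP (X Y : PSh) : PSh.
Proof.
  refine {| ob := fun G => (X G * Y G)%type;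
            fm := fun G G' w p => (fm X w (fst p), fm Y w (snd p)) |}.
  - intros G [x y]; simpl; rewrite !fm_id; reflexivity.
  - intros G1 G2 G3 w1 w2 [x y]; simpl; rewrite !fm_comp; reflexivity.
Defined.

Definition pfstN X Y : NT (prodP X Y) X.
Proof. refine (exist _ (fun G p => fst p) _); intros; reflexivity. Defined.
Definition psndN X Y : NT (prodP X Y) Y.
Proof. refine (exist _ (fun G p => snd p) _); intros; reflexivity. Defined.
Definition pairN C X Y (f : NT C X) (g : NT C Y) : NT C (prodP X Y).
Proof.
  refine (exist _ (fun G c => (proj1_sig f G c, proj1_sig g G c)) _).
  intros; simpl; rewrite (proj2_sig f), (proj2_sig g); reflexivity.
Defined.

Definition ExpC (X Y : PSh) G :=
  {f : forall D, Wk G D -> X D -> Y D |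
    forall D D' (w : Wk G D) (w' : Wk D D') x, fm Y w' (f D w x) = f D' (wcomp w w') (fm X w' x)}.

Lemma exp_ext X Y G (f g : ExpC X Y G) :
  (forall D w x, proj1_sig f D w x = proj1_sig g D w x) -> f = g.
Proof.
  destruct f as [f Hf], g as [g Hg]; simpl; intro H.
  assert (f = g).
  { apply functional_extensionality_dep; intro D; apply functional_extensionality; intro w;
    apply functional_extensionality; auto. }
  subst. f_equal. apply proof_irrelevance.
Qed.

Definition expFm X Y G G' (w0 : Wk G G') (f : ExpC X Y G) : ExpC X Y G'.
Proof.
  refine (exist _ (fun D w x => proj1_sig f D (wcomp w0 w) x) _).
  intros. rewrite (proj2_sig f), wcomp_assoc. reflexivity.
Defined.

Definition expP (X Y : PSh) : PSh.
Proof.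
  refine {| ob := ExpC X Y; fm := @expFm X Y |}.
  - intros G f; apply exp_ext; intros; simpl. rewrite wcomp_id_l; reflexivity.
  - intros G1 G2 G3 w1 w2 f; apply exp_ext; intros; simpl. rewrite wcomp_assoc; reflexivity.
Defined.

Definition evN X Y : NT (prodP (expP X Y) X) Y.
Proof.
  refine (exist _ (fun G p => proj1_sig (fst p) G (idWk G) (snd p)) _).
  intros G G' w [f x]; simpl. rewrite (proj2_sig f), wcomp_id_l, wcomp_id_r. reflexivity.
Defined.

Definition curC C X Y (f : NT (prodP C X) Y) G (c : C G) : ExpC X Y G.
Proof.
  refine (exist _ (fun D w x => proj1_sig f D (fm C w c, x)) _).
  intros. rewrite fm_comp.
  exact (eq_sym (proj2_sig f D D' w' (fm C w c, x))).
Defined.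

Definition curN C X Y (f : NT (prodP C X) Y) : NT C (expP X Y).
Proof.
  refine (exist _ (fun G (c : C G) => @curC C X Y f G c) _).
  intros G G' w c; apply exp_ext; intros; simpl. rewrite fm_comp. reflexivity.
Defined.

Definition M0 : CCC.
Proof.
  refine {| Obj := PSh; Hom := NT; idm := idN; comp := compN;
            one := oneP; bang := bangN; prod := prodP; pfst := pfstN; psnd := psndN;
            pair := pairN; expo := expP; ev := evN; cur := curN |}.
  - intros; apply nt_ext; reflexivity.
  - intros; apply nt_ext; reflexivity.
  - intros; apply nt_ext; reflexivity.
  - intros a f; apply nt_ext; intros G x; destruct (proj1_sig f G x); reflexivity.
  - intros; apply nt_ext; reflexivity.
  - intros; apply nt_ext; reflexivity.
  - intros c a b h; apply nt_ext; intros G x; simpl; apply surjective_pairing.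
  - intros c a b f; apply nt_ext; intros G [x y]; simpl; rewrite fm_id; reflexivity.
  - intros c a b h; apply nt_ext; intros G x; simpl; apply exp_ext; intros D w y; simpl.
    rewrite (proj2_sig h); simpl. rewrite wcomp_id_r. reflexivity.
Defined.

Definition LP (X : PSh) : PSh.
Proof.
  refine {| ob := fun G => {D : Ctx & (X D * Rel D G)%type};
            fm := fun G G' (w : Wk G G') (p : {D : Ctx & (X D * Rel D G)%type}) =>
                   let (D, q) := p in
                   let (D', r) := factorWk w (snd q) in
                   existT (fun D => (X D * Rel D G')%type) D' (fm X (fst r) (fst q), snd r) |}.
  - intros G [D [x e]]; simpl. rewrite factorWk_id; simpl. rewrite fm_id. reflexivity.
  - intros G1 G2 G3 w1 w2 [D [x e]]; simpl. rewrite factorWk_comp.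
    destruct (factorWk w1 e) as [D1 [a1 b1]]; simpl.
    destruct (factorWk w2 b1) as [D2 [a2 b2]]; simpl. rewrite fm_comp. reflexivity.
Defined.

Definition RP (Y : PSh) : PSh.
Proof.
  refine {| ob := fun G => Y (clock G); fm := fun G G' w y => fm Y (wkeepL w) y |}.
  - intros G y. exact (fm_id Y (clock G) y).
  - intros G1 G2 G3 w1 w2 y. exact (fm_comp Y (wkeepL w1) (wkeepL w2) y).
Defined.

Definition LmapN X Y (f : NT X Y) : NT (LP X) (LP Y).
Proof.
  refine (exist _ (fun G (p : LP X G) => let (D, q) := p in
     existT (fun D => (Y D * Rel D G)%type) D (proj1_sig f D (fst q), snd q) : LP Y G) _).
  intros G G' w [D [x e]]; simpl. destruct (factorWk w e) as [D1 [a b]]; simpl.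
  rewrite (proj2_sig f). reflexivity.
Defined.

Definition RmapN X Y (g : NT X Y) : NT (RP X) (RP Y).
Proof.
  refine (exist _ (fun G y => proj1_sig g (clock G) y) _).
  intros G G' w y; simpl. exact (proj2_sig g (clock G) (clock G') (wkeepL w) y).
Defined.

Definition adjrN X Y (f : NT (LP X) Y) : NT X (RP Y).
Proof.
  refine (exist _ (fun G x => proj1_sig f (clock G) (existT _ G (x, r_nil G))) _).
  intros G G' w x; simpl. rewrite <- (proj2_sig f). reflexivity.
Defined.

Definition adjlN X Y (g : NT X (RP Y)) : NT (LP X) Y.
Proof.
  refine (exist _ (fun G (p : LP X G) => let (D, q) := p in fm Y (factor (snd q)) (proj1_sig g D (fst q))) _).
  intros G G' w [D [x e]]; simpl. pose proof (factor_nat e w) as Hn.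
  destruct (factorWk w e) as [D1 [a b]]; simpl in *.
  rewrite (proj2_sig g); simpl. rewrite <- !fm_comp, Hn. reflexivity.
Defined.

Definition F0 : Adj M0.
Proof.
  refine (@Build_Adj M0 LP LmapN _ _ RP RmapN _ _ adjrN adjlN _ _ _).
  - intros; apply nt_ext; intros G [D [x e]]; reflexivity.
  - intros; apply nt_ext; intros G [D [x e]]; reflexivity.
  - intros; apply nt_ext; reflexivity.
  - intros; apply nt_ext; reflexivity.
  - intros a b f; apply nt_ext; intros G [D [x e]]; simpl.
    rewrite <- (proj2_sig f); simpl. rewrite factorWk_factor; simpl. rewrite fm_id. reflexivity.
  - intros a b g; apply nt_ext; intros G x; simpl. exact (fm_id b (clock G) _).
  - intros; apply nt_ext; reflexivity.
Defined.

Definition io0 : PSh := {| ob := fun G => Tm G iota; fm := fun G G' w t => wkTm t w;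
  fm_id := fun G t => wkTm_id t; fm_comp := fun G1 G2 G3 w1 w2 t => wkTm_comp t w1 w2 |}.
Set Implicit Arguments.

Definition ST (A : Ty) : PSh := @semTy M0 F0 io0 A.
Definition SC (G : Ctx) : PSh := @semCtx M0 F0 io0 G.

Unset Implicit Arguments.
Record RRT (A : Ty) := {
  reify : forall G, ST A G -> Tm G A;
  reflect : forall G, Tm G A -> ST A G;
  reify_nat : forall G G' (w : Wk G G') v, reify G' (fm (ST A) w v) = wkTm (reify G v) w;
  reflect_nat : forall G G' (w : Wk G G') t, reflect G' (wkTm t w) = fm (ST A) w (reflect G t)
}.
Set Implicit Arguments.
Arguments reify {A} r {G} v.
Arguments reflect {A} r {G} t.
Arguments reify_nat {A} r {G G'} w v.
Arguments reflect_nat {A} r {G G'} w t.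

Definition rrIota : RRT iota.
Proof.
  refine (@Build_RRT iota (fun G v => v) (fun G t => t) _ _); reflexivity.
Defined.

Definition reflArr A B (ra : RRT A) (rb : RRT B) G (t : Tm G (arr A B)) : ST (arr A B) G.
Proof.
  refine (exist _ (fun D (w : Wk G D) (x : ST A D) => reflect rb (app (wkTm t w) (reify ra x))) _).
  intros D D' w w' x. rewrite <- reflect_nat. simpl. rewrite reify_nat, <- wkTm_comp. reflexivity.
Defined.

Definition mkArr A B (ra : RRT A) (rb : RRT B) : RRT (arr A B).
Proof.
  refine (@Build_RRT (arr A B)
    (fun G (v : ST (arr A B) G) => lam (reify rb (proj1_sig v _ (wdrop A (idWk G)) (reflect ra (var (vz G A))))))
    (fun G t => reflArr ra rb t) _ _).
  - intros G G' w v. simpl. f_equal. rewrite <- reify_nat.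
    rewrite (proj2_sig v). rewrite <- reflect_nat. simpl.
    rewrite wcomp_id_l, wcomp_id_r. reflexivity.
  - intros G G' w t. apply exp_ext. intros D w1 x. simpl. rewrite wkTm_comp. reflexivity.
Defined.

Definition mkBox A (ra : RRT A) : RRT (box A).
Proof.
  refine (@Build_RRT (box A)
    (fun G (v : ST (box A) G) => tbox (reify ra (v : ST A (clock G))))
    (fun G t => (reflect ra (unbox t (r_nil G)) : ST (box A) G)) _ _).
  - intros G G' w v. simpl. f_equal. apply (reify_nat ra (wkeepL w)).
  - intros G G' w t. simpl. exact (reflect_nat ra (wkeepL w) (unbox t (r_nil G))).
Defined.

Fixpoint rr (A : Ty) : RRT A :=
  match A with
  | iota => rrIota
  | arr A B => mkArr (rr A) (rr B)
  | box A => mkBox (rr A)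
  end.

Unset Implicit Arguments.
Fixpoint LR (A : Ty) : forall G, Tm G A -> ST A G -> Prop :=
  match A as A0 return forall G, Tm G A0 -> ST A0 G -> Prop with
  | iota => fun G t v => Conv t (v : Tm G iota)
  | arr A B => fun G t (v : ST (arr A B) G) =>
      forall D (w : Wk G D) a x, LR A D a x -> LR B D (app (wkTm t w) a) (proj1_sig v D w x)
  | box A => fun G t (v : ST (box A) G) => LR A (clock G) (unbox t (r_nil G)) v
  end.

Lemma LR_conv A : forall G (t t' : Tm G A) v, Conv t t' -> LR A G t' v -> LR A G t v.
Proof.
  induction A; simpl; intros G t t' v Hc H.
  - eapply conv_trans; eauto.
  - intros D w a x Hx. eapply IHA2; [| apply (H D w a x Hx)].
    apply cong_app; [apply Conv_wk; auto | apply conv_refl].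
  - eapply IHA; [| apply H]. apply cong_unbox; auto.
Qed.

Lemma LR_mono A : forall G t v G' (w : Wk G G'), LR A G t v -> LR A G' (wkTm t w) (fm (ST A) w v).
Proof.
  induction A; simpl; intros G t v G' w H.
  - apply Conv_wk; auto.
  - intros D w' a x Hx. rewrite <- wkTm_comp. apply H; auto.
  - exact (IHA _ _ _ _ (wkeepL w) H).
Qed.

Lemma LR_rr A : (forall G t, LR A G t (reflect (rr A) t)) /\
                (forall G t v, LR A G t v -> Conv t (reify (rr A) v)).
Proof.
  induction A as [|A IHA B IHB|A IHA]; simpl; split.
  - intros; apply conv_refl.
  - intros; auto.
  - intros G t D w a x Hx. simpl.
    eapply LR_conv; [| apply (proj1 IHB)].
    apply cong_app; [apply conv_refl | apply (proj2 IHA); auto].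
  - intros G t v H. eapply conv_trans; [apply eta_fun|]. apply cong_lam.
    apply (proj2 IHB). apply H. apply (proj1 IHA).
  - intros G t. apply (proj1 IHA).
  - intros G t v H. eapply conv_trans; [apply eta_box|]. apply cong_box. apply (proj2 IHA). exact H.
Qed.

Fixpoint LS (G : Ctx) : forall D, Sub D G -> SC G D -> Prop :=
  match G as G0 return forall D, Sub D G0 -> SC G0 D -> Prop with
  | cnil => fun _ _ _ => True
  | cext G A => fun D s (r : SC (cext G A) D) => LS G D (subTail s) (fst r) /\ LR A D (subHead s) (snd r)
  | clock G => fun D s (r : SC (clock G) D) =>
      let (D0, q) := r in exists s0, s = slock s0 (snd q) /\ LS G D0 s0 (fst q)
  end.

Lemma LS_mono G : forall D s r D' (w : Wk D D'), LS G D s r -> LS G D' (wkSub s w) (fm (SC G) w r).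
Proof.
  induction G; intros D s r D' w H.
  - exact I.
  - dependent destruction s. destruct H as [H1 H2]. simpl. split.
    + apply IHG; auto.
    + apply LR_mono; auto.
  - destruct r as [D0 [r0 e]]. destruct H as [s0 [Hs H]]. subst s. simpl.
    destruct (factorWk w e) as [D1 [a b]]; simpl. exists (wkSub s0 a); split; auto.
Qed.

Lemma LS_lookup G A (x : Var G A) : forall D s r, LS G D s r ->
  LR A D (lookup x s) (proj1_sig (@semVar M0 F0 io0 G A x) D r).
Proof.
  induction x; intros D s r H; simpl in *.
  - apply H.
  - apply IHx. apply H.
Qed.

Lemma LS_rel0 D0 G (e : Rel D0 G) : forall D s r, LS G D s r ->
  let (D1, q) := proj1_sig (@semRel M0 F0 io0 D0 G e) D r in
  exists s1, factorSub e s = existT _ D1 (s1, snd q) /\ LS D0 D1 s1 (fst q).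
Proof.
  induction e; intros D s r H; simpl in *.
  - destruct r as [D1 [r1 e1]]. destruct H as [s0 [Hs H]]. subst s. simpl. exists s0; auto.
  - apply IHe. apply H.
Qed.

Lemma LS_rel D0 G (e : Rel D0 G) D s r D1 r1 e1 : LS G D s r ->
  proj1_sig (@semRel M0 F0 io0 D0 G e) D r = existT _ D1 (r1, e1) ->
  exists s1, factorSub e s = existT _ D1 (s1, e1) /\ LS D0 D1 s1 r1.
Proof.
  intros H E. pose proof (LS_rel0 _ _ e D s r H) as K. rewrite E in K. exact K.
Qed.

Lemma fund G A (t : Tm G A) : forall D s r, LS G D s r ->
  LR A D (subst t s) (proj1_sig (@semTm M0 F0 io0 G A t) D r).
Proof.
  induction t; intros D0 s rho H; simpl.
  - apply LS_lookup; auto.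
  - intros D w a x Hx.
    eapply LR_conv; [eapply conv_trans; [apply beta_fun| rewrite key_lam; apply conv_refl]|].
    apply IHt. simpl. split; auto. apply LS_mono; auto.
  - pose proof (IHt1 _ _ _ H D0 (idWk D0) _ _ (IHt2 _ _ _ H)) as K.
    rewrite wkTm_id in K. exact K.
  - eapply LR_conv; [apply beta_box|]. simpl.
    change (wkeepL (idWk D0)) with (idWk (clock D0)). rewrite wkTm_id.
    apply IHt. simpl. exists s; auto.
  - simpl.
    assert (Hc : forall p : {D1 : Ctx & (SC D D1 * Rel D1 D0)%type},
      proj1_sig (@semRel M0 F0 io0 D G r) D0 rho = p ->
      LR A D0 (let (D1, p) := factorSub r s in unbox (subst t (fst p)) (snd p))
        (let (D1, q) := p in fm (ST A) (factor (snd q)) (proj1_sig (@semTm M0 F0 io0 D (box A) t) D1 (fst q)))).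
    { intros [D1 [r1 e1]] Eq.
      destruct (LS_rel _ _ r _ s rho D1 r1 e1 H Eq) as [s1 [Hf Hs]]. rewrite Hf. simpl.
      pose proof (LR_mono _ _ _ _ _ (factor e1) (IHt _ _ _ Hs)) as K.
      simpl in K. rewrite factorWk_factor in K. simpl in K. rewrite wkTm_id in K. exact K. }
    exact (Hc _ eq_refl).
Qed.

Fixpoint idEnv (G : Ctx) : SC G G :=
  match G as G0 return SC G0 G0 with
  | cnil => tt
  | cext G A => (fm (SC G) (wdrop A (idWk G)) (idEnv G), reflect (rr A) (var (vz G A)))
  | clock G => existT (fun D => (SC G D * Rel D (clock G))%type) G (idEnv G, r_nil G)
  end.

Lemma LS_id G : LS G G (idSub G) (idEnv G).
Proof.
  induction G; simpl.
  - exact I.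
  - split.
    + apply LS_mono; auto.
    + apply (proj1 (LR_rr t)).
  - exists (idSub G); auto.
Qed.

Unset Implicit Arguments.
Theorem theorem5 (G : Ctx) (A : Ty) (t u : Tm G A) :
  (forall (M : CCC) (F : Adj M) (io : Obj M),
      @semTm M F io G A t = @semTm M F io G A u) ->
  Conv t u.
Proof.
  intros H. pose proof (H M0 F0 io0) as E.
  pose proof (proj2 (LR_rr A) G _ _ (fund _ _ t _ _ _ (LS_id G))) as Ht.
  pose proof (proj2 (LR_rr A) G _ _ (fund _ _ u _ _ _ (LS_id G))) as Hu.
  rewrite subst_id in Ht, Hu. rewrite E in Ht.
  eapply conv_trans; [exact Ht| apply conv_sym; exact Hu].
Qed.
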